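(* Let $A,B\in\mathbb{B}(\mathscr{H})$, let $x\in\mathscr{H}$ be a unit vector, and let $f:[0,\infty)\to\mathbb{R}$ be an increasing convex function. Then for every $0<\alpha<1$, \[ f\left(|\langle Ax,x\rangle\langle Bx,x\rangle|^2\right)\le \frac{f\left(|\langle BAx,x\rangle|^2\right)+\left\langle\left(\alpha f\left(|A|^{2/\alpha}\right)+(1-\alpha)f\left(|B^*|^{2/(1-\alpha)}\right)\right)x,x\right\rangle}{2}. \] Further, \[ f\left(|\langle Ax,x\rangle\langle Bx,x\rangle|\right)\le \frac12 f\left(|\langle BAx,x\rangle|\right)+\frac14\left\langle\left(f(|A|^2)+f(|B^*|^2)\right)x,x\right\rangle. \]
   Context: $\mathscr{H}$ is a complex Hilbert space with inner product $\langle\cdot,\cdot\rangle$, $\mathbb{B}(\mathscr{H})$ is the algebra of bounded linear operators on it, $T^*$ denotes the adjoint, and $|T|=(T^*T)^{1/2}$. For a positive operator $P$ and a function $f$ on $[0,\infty)$, $f(P)$ is defined by continuous functional calculus. *)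

(* Defs.v *)
From HB Require Import structures.
From mathcomp Require Import all_boot all_order all_algebra.
From mathcomp Require Import complex.
From mathcomp Require Import reals exp.
Set Implicit Arguments.
Unset Strict Implicit.
Unset Printing Implicit Defensive.
Import Order.TTheory GRing.Theory Num.Theory.
Local Open Scope ring_scope.
Local Open Scope complex_scope.

Section Hilbert.
Variable R : realType.
Variable H : lmodType R[i].
Variable ip : H -> H -> R[i].  (* inner product <x, y>, linear in x *)

Definition cabs (z : R[i]) : R := Num.sqrt (complex.Re z ^+ 2 + complex.Im z ^+ 2).

Definition hnorm (x : H) : R := Num.sqrt (complex.Re (ip x x)).

Definition is_inner_product : Prop :=
  [/\ (forall (a : R[i]) (x1 x2 y : H), ip (a *: x1 + x2) y = a * ip x1 y + ip x2 y),
      (forall x y : H, ip y x = (ip x y)^*),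
      (forall x : H, 0 <= complex.Re (ip x x)) &
      (forall x : H, ip x x = 0 -> x = 0)].

Definition is_complete : Prop :=
  forall u : nat -> H,
    (forall e : R, 0 < e -> exists N : nat, forall m n : nat,
        (N <= m)%N -> (N <= n)%N -> hnorm (u m - u n) < e) ->
    exists l : H, forall e : R, 0 < e -> exists N : nat, forall n : nat,
        (N <= n)%N -> hnorm (u n - l) < e.

Definition is_hilbert : Prop := is_inner_product /\ is_complete.

Definition is_bounded (T : H -> H) : Prop :=
  (forall (a : R[i]) (x y : H), T (a *: x + y) = a *: T x + T y) /\
  exists M : R, forall x : H, hnorm (T x) <= M * hnorm x.

Definition is_adjoint (T Ts : H -> H) : Prop :=
  forall x y : H, ip (T x) y = ip x (Ts y).

Definition peval (p : {poly R}) (P : H -> H) (x : H) : H :=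
  \sum_(i < size p) ((p`_i)%:C *: iter i P x).

(* continuous functional calculus: T = g(P) for a positive operator P.
   g(P) is the operator-norm limit of p(P) for polynomials p converging
   uniformly to g on [0, M] for any bound M >= ||P|| (sigma(P) lies in [0,||P||]).
   This relation determines T uniquely, and such T exists whenever g is
   continuous on [0, infinity) and P is positive. *)
Definition is_fcalc (P : H -> H) (g : R -> R) (T : H -> H) : Prop :=
  forall M : R, 0 <= M -> (forall x : H, hnorm (P x) <= M * hnorm x) ->
  forall e : R, 0 < e -> exists p : {poly R},
    (forall t : R, 0 <= t <= M -> `|p.[t] - g t| <= e) /\
    (forall x : H, hnorm (T x - peval p P x) <= e * hnorm x).

End Hilbert.

Definition increasing_on_nonneg (R : realType) (f : R -> R) : Prop :=
  forall x y : R, 0 <= x -> x <= y -> f x <= f y.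

Definition convex_on_nonneg (R : realType) (f : R -> R) : Prop :=
  forall x y t : R, 0 <= x -> 0 <= y -> 0 <= t <= 1 ->
    f (t * x + (1 - t) * y) <= t * f x + (1 - t) * f y.

(* Main.v *)
Require Import Defs.
From HB Require Import structures.
From mathcomp Require Import all_boot all_order all_algebra.
From mathcomp Require Import complex.
From mathcomp Require Import reals exp classical_sets.
From mathcomp Require Import ring lra zify.
Import Order.TTheory GRing.Theory Num.Theory.
Local Open Scope ring_scope.
Local Open Scope complex_scope.
Set Implicit Arguments.
Unset Strict Implicit.
Unset Printing Implicit Defensive.
Section PolyPos.
Variable R : realType.
Variable M : R.
Hypothesis M_gt0 : 0 < M.

Inductive SOS : {poly R} -> Prop :=
| S1 g : SOS (g * g)
| SX g : SOS (g * g * 'X)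
| SM g : SOS (g * g * (M%:P - 'X))
| SD p q : SOS p -> SOS q -> SOS (p + q).

Lemma SOS_sqM g p : SOS p -> SOS (g * g * p).
Proof.
elim=> [h|h|h|p1 q1 _ IH1 _ IH2].
- have -> : g * g * (h * h) = (g * h) * (g * h) by ring.
  exact: S1.
- have -> : g * g * (h * h * 'X) = (g * h) * (g * h) * 'X by ring.
  exact: SX.
- have -> : g * g * (h * h * (M%:P - 'X)) = (g * h) * (g * h) * (M%:P - 'X)
    by ring.
  exact: SM.
- by rewrite mulrDr; apply: SD.
Qed.

Lemma SOS_XMX : SOS ('X * (M%:P - 'X)).
Proof.
set c := (Num.sqrt M)^-1.
have hc : c * c * M = 1.
  by rewrite /c -invfM -expr2 sqr_sqrtr ?mulVf // ?gt_eqF // ltW.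
have -> : 'X * (M%:P - 'X) = (c%:P * (M%:P - 'X)) * (c%:P * (M%:P - 'X)) * 'X
    + (c%:P * 'X) * (c%:P * 'X) * (M%:P - 'X).
  have -> : (c%:P * (M%:P - 'X)) * (c%:P * (M%:P - 'X)) * 'X
    + (c%:P * 'X) * (c%:P * 'X) * (M%:P - 'X) = (c%:P * c%:P * M%:P) * ('X * (M%:P - 'X)) by ring.
  by rewrite -!polyCM hc mul1r.
by apply: SD; [apply: SX | apply: SM].
Qed.

Lemma SOS_mulX q : SOS q -> SOS ('X * q).
Proof.
elim=> [h|h|h|p1 q1 _ IH1 _ IH2].
- have -> : 'X * (h * h) = h * h * 'X by ring.
  exact: SX.
- have -> : 'X * (h * h * 'X) = (h * 'X) * (h * 'X) by ring.
  exact: S1.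
- have -> : 'X * (h * h * (M%:P - 'X)) = h * h * ('X * (M%:P - 'X)) by ring.
  exact/SOS_sqM/SOS_XMX.
- by rewrite mulrDr; apply: SD.
Qed.

Lemma SOS_mulMX q : SOS q -> SOS ((M%:P - 'X) * q).
Proof.
elim=> [h|h|h|p1 q1 _ IH1 _ IH2].
- have -> : (M%:P - 'X) * (h * h) = h * h * (M%:P - 'X) by ring.
  exact: SM.
- have -> : (M%:P - 'X) * (h * h * 'X) = h * h * ('X * (M%:P - 'X)) by ring.
  exact/SOS_sqM/SOS_XMX.
- have -> : (M%:P - 'X) * (h * h * (M%:P - 'X)) = (h * (M%:P - 'X)) * (h * (M%:P - 'X)) by ring.
  exact: S1.
- by rewrite mulrDr; apply: SD.
Qed.

Lemma SOS_mul p q : SOS p -> SOS q -> SOS (p * q).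
Proof.
move=> Sp Sq; elim: Sp => [h|h|h|p1 q1 _ IH1 _ IH2].
- exact: SOS_sqM.
- have -> : h * h * 'X * q = h * h * ('X * q) by ring.
  exact/SOS_sqM/SOS_mulX.
- have -> : h * h * (M%:P - 'X) * q = h * h * ((M%:P - 'X) * q) by ring.
  exact/SOS_sqM/SOS_mulMX.
- by rewrite mulrDl; apply: SD.
Qed.
End PolyPos.
Section PolyPos2.
Variable R : realType.
Variable M : R.
Hypothesis M_gt0 : 0 < M.

Lemma SOS_sqC c : 0 <= c -> SOS M c%:P.
Proof.
move=> c0; have -> : c%:P = (Num.sqrt c)%:P * (Num.sqrt c)%:P.
  by rewrite -polyCM -expr2 sqr_sqrtr.
exact: S1.
Qed.

Lemma pos_SOS p : (forall t, 0 <= t <= M -> 0 < p.[t]) -> SOS M p.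
Proof.
move: {2}(size p) (leqnn (size p)) => n; elim: n p => [|n IH] p hs hp.
  have := hp 0; rewrite lexx ltW //= => /(_ isT).
  by move: hs; rewrite leqn0 size_poly_eq0 => /eqP ->; rewrite horner0 ltxx.
have hp0 := hp 0; rewrite lexx ltW //= in hp0; have {}hp0 := hp0 isT.
have p0 : p != 0 by apply: contraTneq hp0 => ->; rewrite horner0 ltxx.
case: (size p =P 1%N) => [sz1 | /eqP szn1].
  have pc : p = (p`_0)%:P by rewrite [LHS]size1_polyC ?sz1.
  rewrite pc; apply: SOS_sqC.
  by move: hp0; rewrite {1}pc hornerC => /ltW.
pose pc := map_poly (real_complex R) p.
have : size pc != 1%N by rewrite size_map_poly.
move/closed_rootP=> [z rz].
case: z rz => a b rz.
have sizeq : forall q r, p = q * r -> (1 < size r)%N -> (size q <= n)%N.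
  move=> q r pqr sr; have q0 : q != 0 by apply: contraNneq p0 => q0; rewrite pqr q0 mul0r.
  have r0 : r != 0 by rewrite -size_poly_gt0; apply: ltnW.
  move: hs; rewrite pqr size_mul //; case: (size r) sr => // k sr; rewrite addnS /=; case: k sr => // j _; rewrite addnS ltnS; apply: leq_trans; exact: leq_addr.
case: (b =P 0) => [b0 | /eqP bn0].
- subst b.
  have ra : root p a by rewrite -(fmorph_root (real_complex R)).
  have [q pq] := factor_theorem _ _ ra.
  have sq := sizeq _ _ pq; rewrite size_XsubC in sq; have {}sq := sq isT.
  have pt : forall t, p.[t] = q.[t] * (t - a) by move=> t; rewrite pq hornerM hornerXsubC.
  case: (ltrP a 0) => [aneg | apos].
    rewrite pq; apply: (SOS_mul M_gt0).
      apply: IH => // t ht; have := hp t ht; rewrite pt => h.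
      case/andP: ht => ht0 _; nra.
    have -> : 'X - a%:P = 1 * 1 * 'X + (- a)%:P by rewrite !mul1r polyCN.
    by apply: SD; [apply: SX | apply: SOS_sqC; lra].
  case: (ltrP M a) => [aM | aM].
    have -> : p = (- q) * (a%:P - 'X) by rewrite pq; ring.
    apply: (SOS_mul M_gt0).
      apply: IH; first by rewrite size_polyN.
      move=> t ht; have := hp t ht; rewrite pt hornerN => h.
      case/andP: ht => _ htM; nra.
    have -> : a%:P - 'X = 1 * 1 * (M%:P - 'X) + (a - M)%:P by rewrite !mul1r polyCB; ring.
    by apply: SD; [apply: SM | apply: SOS_sqC; lra].
  have := hp a; rewrite apos aM => /(_ isT).
  by move: ra; rewrite /root => /eqP ->; rewrite ltxx.
pose d : {poly R} := ('X - a%:P) ^+ 2 + (b ^+ 2)%:P.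
have dt : forall t, d.[t] = (t - a) ^+ 2 + b ^+ 2.
  by move=> t; rewrite /d hornerD horner_exp hornerXsubC hornerC.
have b2 : 0 < b ^+ 2 by rewrite exprn_even_gt0.
have dpos : forall t, 0 < d.[t].
  by move=> t; rewrite dt; have := sqr_ge0 (t - a); lra.
set z := a +i* b in rz.
have pcc : map_poly conjc pc = pc.
  rewrite /pc -map_poly_comp; apply: eq_map_poly => c /=; exact: conjc_real.
have rzc0 : root pc z^* by rewrite -complex_root_conj pcc.
have rzc : root pc (a -i* b) by exact: rzc0.
have [q1 pq1] := factor_theorem _ _ rz.
have rq1 : root q1 (a -i* b).
  move: rzc; rewrite /root pq1 hornerM hornerXsubC mulf_eq0 => /orP [h|h]; first exact h.
  exfalso; move: h; rewrite subr_eq0 /z /= eq_complex /= => /andP [_ /eqP hb].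
  have b0 : b = 0 by lra.
  by rewrite b0 eqxx in bn0.
have [q2 pq2] := factor_theorem _ _ rq1.
have md : map_poly (real_complex R) d = ('X - (a -i* b)%:P) * ('X - z%:P).
  rewrite /d rmorphD rmorphXn /= map_polyXsubC map_polyC /=.
  have -> : 'X - (a -i* b)%:P = ('X - a%:C%:P) + (0 +i* b)%:P.
    have -> : a -i* b = a%:C - (0 +i* b) by simpc.
    by rewrite polyCB; ring.
  have -> : 'X - z%:P = ('X - a%:C%:P) - (0 +i* b)%:P.
    have -> : z = a%:C + (0 +i* b) by rewrite /z; simpc.
    by rewrite polyCD; ring.
  have -> : ((b ^+ 2)%:C)%:P = - ((0 +i* b)%:P * (0 +i* b)%:P).
    by rewrite -polyCM -polyCN; congr (_%:P); simpc; rewrite expr2.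
  ring.
have dd : d %| p.
  rewrite -(dvdp_map (real_complex R)) md -/pc pq1 pq2 -mulrA.
  exact: dvdp_mulIr.
have pd := divpK dd.
set q := p %/ d in pd.
have sd : size d = 3%N.
  rewrite /d size_polyDl ?size_exp_XsubC // size_polyC.
  by case: (b ^+ 2 != 0).
rewrite -pd; apply: (SOS_mul M_gt0).
  apply: (IH q); first by apply: (sizeq q d) => //; rewrite sd.
  move=> t ht; have := hp t ht; rewrite -pd hornerM => h.
  have := dpos t; nra.
apply: SD; first by rewrite expr2; apply: S1.
exact: SOS_sqC (ltW b2).
Qed.
End PolyPos2.
Section IP.
Variable R : realType.
Variable H : lmodType R[i].
Variable ip : H -> H -> R[i].
Hypothesis hip : is_inner_product ip.

Local Notation rip x y := (complex.Re (ip x y)).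

Lemma ipDZl a x1 x2 y : ip (a *: x1 + x2) y = a * ip x1 y + ip x2 y.
Proof. by case: hip. Qed.
Lemma ip_sym x y : ip y x = (ip x y)^*.
Proof. by case: hip. Qed.
Lemma ip_ge0 x : 0 <= rip x x.
Proof. by case: hip. Qed.
Lemma ip_def x : ip x x = 0 -> x = 0.
Proof. by case: hip => _ _ _; apply. Qed.

Lemma ip0l y : ip 0 y = 0.
Proof.
have := ipDZl 1 0 0 y; rewrite scaler0 addr0 mul1r.
by rewrite -{1}[ip 0 y]addr0 => /addrI ->.
Qed.
Lemma ipDl x y z : ip (x + y) z = ip x z + ip y z.
Proof. by rewrite -[x]scale1r ipDZl mul1r scale1r. Qed.
Lemma ipZl a x z : ip (a *: x) z = a * ip x z.
Proof. by rewrite -[a *: x]addr0 ipDZl ip0l addr0. Qed.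
Lemma ipNl x z : ip (- x) z = - ip x z.
Proof. by rewrite -scaleN1r ipZl mulN1r. Qed.
Lemma ipBl x y z : ip (x - y) z = ip x z - ip y z.
Proof. by rewrite ipDl ipNl. Qed.
Lemma ip_suml (I : finType) (F : I -> H) z :
  ip (\sum_i F i) z = \sum_i ip (F i) z.
Proof.
apply: (big_rec2 (fun a b => ip b z = a)); first by rewrite ip0l.
by move=> i a b _ <-; rewrite ipDl.
Qed.
Lemma ip0r y : ip y 0 = 0.
Proof. by rewrite ip_sym ip0l conjc0. Qed.
Lemma ipDr x y z : ip z (x + y) = ip z x + ip z y.
Proof. by rewrite ip_sym ipDl rmorphD /= -!ip_sym. Qed.
Lemma ipZr a x z : ip z (a *: x) = conjc a * ip z x.
Proof. by rewrite ip_sym ipZl rmorphM /= -!ip_sym. Qed.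
Lemma ipNr x z : ip z (- x) = - ip z x.
Proof. by rewrite ip_sym ipNl rmorphN /= -!ip_sym. Qed.
Lemma ipBr x y z : ip z (x - y) = ip z x - ip z y.
Proof. by rewrite ipDr ipNr. Qed.
Lemma ip_sumr (I : finType) (F : I -> H) z :
  ip z (\sum_i F i) = \sum_i ip z (F i).
Proof.
apply: (big_rec2 (fun a b => ip z b = a)); first by rewrite ip0r.
by move=> i a b _ <-; rewrite ipDr.
Qed.
Lemma Re_conj (c : R[i]) : complex.Re (c^*) = complex.Re c.
Proof. by case: c. Qed.
Lemma Im_conj (c : R[i]) : complex.Im (c^*) = - complex.Im c.
Proof. by case: c. Qed.
Lemma rip_sym x y : rip y x = rip x y.
Proof. by rewrite ip_sym Re_conj. Qed.
Lemma ipxx_Im x : complex.Im (ip x x) = 0.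
Proof.
have := ip_sym x x => /(congr1 (@complex.Im R)); rewrite Im_conj => h; lra.
Qed.
Lemma ipxx x : ip x x = (rip x x)%:C.
Proof. by move: (ipxx_Im x); case: (ip x x) => a b /= ->. Qed.
Lemma rip_def x : rip x x = 0 -> x = 0.
Proof. by move=> h; apply: ip_def; rewrite ipxx h. Qed.
Lemma ripDl x y z : rip (x + y) z = rip x z + rip y z.
Proof. by rewrite ipDl raddfD. Qed.
Lemma ripDr x y z : rip z (x + y) = rip z x + rip z y.
Proof. by rewrite ipDr raddfD. Qed.
Lemma ripNl x z : rip (- x) z = - rip x z.
Proof. by rewrite ipNl raddfN. Qed.
Lemma ripNr x z : rip z (- x) = - rip z x.
Proof. by rewrite ipNr raddfN. Qed.
Lemma ripBl x y z : rip (x - y) z = rip x z - rip y z.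
Proof. by rewrite ripDl ripNl. Qed.
Lemma ripBr x y z : rip z (x - y) = rip z x - rip z y.
Proof. by rewrite ripDr ripNr. Qed.
Lemma ripZl (t : R) x z : rip (t%:C *: x) z = t * rip x z.
Proof. by rewrite ipZl; case: (ip x z) => a b /=; simpc. Qed.
Lemma ripZr (t : R) x z : rip z (t%:C *: x) = t * rip z x.
Proof. by rewrite rip_sym ripZl rip_sym. Qed.
End IP.
Section Norms.
Variable R : realType.
Implicit Types a b c : R[i].

Lemma Re0 : complex.Re (0 : R[i]) = 0. Proof. by []. Qed.
Lemma ReM_real (t : R) c : complex.Re (t%:C * c) = t * complex.Re c.
Proof. by case: c => u v /=; simpc. Qed.
Lemma cabs1 : cabs (1 : R[i]) = 1.
Proof. by rewrite /cabs /= expr1n expr0n addr0 sqrtr1. Qed.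
Lemma cabs_ge0 c : 0 <= cabs c.
Proof. exact: sqrtr_ge0. Qed.
Lemma cabs_norm c : `|c| = (cabs c)%:C.
Proof. by rewrite normc_def. Qed.
Lemma cabsM a b : cabs (a * b) = cabs a * cabs b.
Proof. by apply: (@complexI R); rewrite rmorphM /= -!cabs_norm normrM. Qed.
Lemma cabsD a b : cabs (a + b) <= cabs a + cabs b.
Proof. by rewrite -lecR rmorphD /= -!cabs_norm ler_normD. Qed.
Lemma cabsN a : cabs (- a) = cabs a.
Proof. by apply: (@complexI R); rewrite -!cabs_norm normrN. Qed.
Lemma cabsC (t : R) : cabs t%:C = `|t|.
Proof. by rewrite /cabs /= expr0n /= addr0 sqrtr_sqr. Qed.
Lemma cabs_conj a : cabs (a^*) = cabs a.
Proof. by case: a => u v; rewrite /cabs /= sqrrN. Qed.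
Lemma cabs_sq a : cabs a ^+ 2 = complex.Re a ^+ 2 + complex.Im a ^+ 2.
Proof. by rewrite sqr_sqrtr // addr_ge0 // sqr_ge0. Qed.
Lemma mul_conj a : a * a^* = (cabs a ^+ 2)%:C.
Proof. rewrite cabs_sq; case: a => u v /=; simpc; by apply/eqP; rewrite eq_complex /= !expr2 [v * u]mulrC addNr !eqxx. Qed.
Lemma Re_le_cabs a : `|complex.Re a| <= cabs a.
Proof.
rewrite -(ler_pXn2r (_ : 0 < 2)%N) ?nnegrE ?cabs_ge0 // cabs_sq real_normK ?num_real //.
by rewrite lerDl sqr_ge0.
Qed.
Lemma Im_le_cabs a : `|complex.Im a| <= cabs a.
Proof.
rewrite -(ler_pXn2r (_ : 0 < 2)%N) ?nnegrE ?cabs_ge0 // cabs_sq real_normK ?num_real //.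
by rewrite lerDr sqr_ge0.
Qed.
Lemma cabs_eq0 a : cabs a = 0 -> a = 0.
Proof. by move=> h; apply/eqP; rewrite -normr_eq0 cabs_norm h. Qed.
End Norms.

Section HNorm.
Variable R : realType.
Variable H : lmodType R[i].
Variable ip : H -> H -> R[i].
Hypothesis hip : is_inner_product ip.
Local Notation rip x y := (complex.Re (ip x y)).
Local Notation hn := (hnorm ip).

Lemma hn_ge0 x : 0 <= hn x.
Proof. exact: sqrtr_ge0. Qed.
Lemma hn_sq x : hn x ^+ 2 = rip x x.
Proof. by rewrite sqr_sqrtr // ip_ge0. Qed.

Lemma CS_real x y : rip x y ^+ 2 <= rip x x * rip y y.
Proof.
have [y0|yn0] := eqVneq (rip y y) 0.
  by rewrite (rip_def hip y0) !(ip0r hip) Re0 expr0n /= mulr0.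
have ypos : 0 < rip y y by rewrite lt_def yn0 ip_ge0.
set t := - (rip x y / rip y y).
have := ip_ge0 hip (x + t%:C *: y).
move=> h; rewrite !(ripDl hip, ripDr hip, ripZl hip, ripZr hip) (rip_sym hip y x) in h.
have e : rip x x * rip y y - rip x y ^+ 2 =
  rip y y * (rip x x + t * rip x y + (t * rip x y + t * (t * rip y y))).
  by rewrite /t; field; rewrite yn0.
have hs := rip_sym hip x y. rewrite hs in h. rewrite -subr_ge0 e. exact: mulr_ge0 (ltW ypos) h.
Qed.

Lemma rip_le x y : rip x y <= hn x * hn y.
Proof.
rewrite -sqrtrM ?ip_ge0 //.
apply: le_trans (ler_norm _) _.
rewrite -sqrtr_sqr ler_sqrt ?mulr_ge0 ?ip_ge0 //; exact: CS_real.
Qed.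

Lemma hnD x y : hn (x + y) <= hn x + hn y.
Proof.
rewrite -(ler_pXn2r (_ : 0 < 2)%N) ?nnegrE ?addr_ge0 ?hn_ge0 //.
rewrite hn_sq !(ripDl hip, ripDr hip) (rip_sym hip y x) sqrrD !hn_sq.
have h := rip_le y x; rewrite mulrC in h; rewrite mulr2n; lra.
Qed.

Lemma hnZ a x : hn (a *: x) = cabs a * hn x.
Proof.
rewrite /hnorm ipZl // ipZr // mulrA mul_conj ReM_real.
by rewrite sqrtrM ?sqr_ge0 // sqrtr_sqr ger0_norm ?cabs_ge0.
Qed.

Lemma hnN x : hn (- x) = hn x.
Proof. by rewrite -scaleN1r hnZ cabsN cabs1 mul1r. Qed.

Lemma hn_eq0 x : hn x = 0 -> x = 0.
Proof.
move=> h; apply: (rip_def hip); rewrite -hn_sq h expr0n //.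
Qed.

Lemma CS x y : cabs (ip x y) <= hn x * hn y.
Proof.
set w := ip x y.
have [w0|wn0] := eqVneq (cabs w) 0.
  by rewrite w0 mulr_ge0 ?hn_ge0.
have wpos : 0 < cabs w by rewrite lt_def wn0 cabs_ge0.
have h1 : rip ((w^*) *: x) y = cabs w ^+ 2.
  by rewrite ipZl // -/w mulrC mul_conj.
have := CS_real ((w^*) *: x) y.
rewrite h1 -!hn_sq hnZ cabs_conj => h.
have : cabs w ^+ 2 <= (hn x * hn y) ^+ 2.
  rewrite -(ler_pM2l (_ : 0 < cabs w ^+ 2)); last by rewrite exprn_gt0.
  by rewrite -expr2 -exprMn_comm ?exprMn; [ nra | apply: mulrC ].
by rewrite ler_pXn2r ?nnegrE ?cabs_ge0 ?mulr_ge0 ?hn_ge0.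
Qed.
End HNorm.
Section Ops.
Variable R : realType.
Variable H : lmodType R[i].

Definition lin (T : H -> H) := forall (a : R[i]) x y, T (a *: x + y) = a *: T x + T y.

Variable T : H -> H.
Hypothesis hT : lin T.

Lemma lin0 : T 0 = 0.
Proof. by have := hT 1 0 0; rewrite scaler0 addr0 scale1r -{1}[T 0]addr0 => /addrI /esym. Qed.
Lemma linD x y : T (x + y) = T x + T y.
Proof. by rewrite -[x]scale1r hT !scale1r. Qed.
Lemma linZ a x : T (a *: x) = a *: T x.
Proof. by rewrite -[a *: x]addr0 hT lin0 addr0. Qed.
Lemma linN x : T (- x) = - T x.
Proof. by rewrite -scaleN1r linZ scaleN1r. Qed.
Lemma linB x y : T (x - y) = T x - T y.
Proof. by rewrite linD linN. Qed.
Lemma lin_sum (I : finType) (F : I -> H) : T (\sum_i F i) = \sum_i T (F i).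
Proof.
apply: (big_rec2 (fun a b => T b = a)); first by rewrite lin0.
by move=> i a b _ <-; rewrite linD.
Qed.
End Ops.

Lemma lin_iter (R : realType) (H : lmodType R[i]) (T : H -> H) n : lin T -> lin (iter n T).
Proof.
move=> hT; elim: n => [|n IH] a x y //=.
by rewrite IH hT.
Qed.

Lemma lin_comp (R : realType) (H : lmodType R[i]) (T S : H -> H) :
  lin T -> lin S -> lin (fun x => T (S x)).
Proof. by move=> hT hS a x y; rewrite hS hT. Qed.

Section Peval.
Variable R : realType.
Variable H : lmodType R[i].
Variable P : H -> H.
Hypothesis hP : lin P.

Lemma peval_sz (p : {poly R}) n x : (size p <= n)%N ->
  peval p P x = \sum_(i < n) (p`_i)%:C *: iter i P x.
Proof.
move=> hs; rewrite /peval.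
rewrite (big_ord_widen n (fun i => (p`_i)%:C *: iter i P x) hs).
rewrite [RHS](bigID (fun i : 'I_n => (i < size p)%N)) /= [X in _ = _ + X]big1 ?addr0 //.
by move=> i; rewrite -leqNgt => /(nth_default 0) ->; rewrite scale0r.
Qed.

Lemma peval_lin p : lin (peval p P).
Proof.
move=> a x y; rewrite /peval scaler_sumr -big_split /=; apply: eq_bigr => i _.
by rewrite (lin_iter i hP) scalerDr !scalerA mulrC.
Qed.

Lemma pevalD p q x : peval (p + q) P x = peval p P x + peval q P x.
Proof.
set n := maxn (size p) (size q).
rewrite !(@peval_sz _ n) ?leq_maxl ?leq_maxr //; last first.
  by apply: leq_trans (size_polyD _ _) _.
by rewrite -big_split /=; apply: eq_bigr => i _; rewrite coefD rmorphD /= scalerDl.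
Qed.

Lemma pevalC c x : peval c%:P P x = c%:C *: x.
Proof.
rewrite (@peval_sz _ 1) ?size_polyC ?leq_b1 // big_ord1 /=.
by rewrite coefC.
Qed.

Lemma pevalZ c p x : peval (c *: p) P x = c%:C *: peval p P x.
Proof.
rewrite (@peval_sz _ (size p)) ?size_scale_leq // /peval scaler_sumr.
by apply: eq_bigr => i _; rewrite coefZ rmorphM /= scalerA.
Qed.

Lemma pevalN p x : peval (- p) P x = - peval p P x.
Proof. by rewrite -(scaleN1r p) pevalZ rmorphN /= rmorph1 scaleN1r. Qed.

Lemma pevalB p q x : peval (p - q) P x = peval p P x - peval q P x.
Proof. by rewrite pevalD pevalN. Qed.

Lemma peval0 x : peval 0 P x = 0.
Proof. by rewrite /peval size_poly0 big_ord0. Qed.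

Lemma peval_mulX p x : peval (p * 'X) P x = peval p P (P x).
Proof.
have [->|p0] := eqVneq p 0; first by rewrite mul0r !peval0.
rewrite (@peval_sz _ (size p).+1); last by rewrite size_mulX.
rewrite big_ord_recl coefMX eqxx /= scale0r add0r /peval.
by apply: eq_bigr => i _; rewrite coefMX /= -iterSr.
Qed.

Lemma peval_comm p x : peval p P (P x) = P (peval p P x).
Proof.
rewrite /peval (lin_sum hP); apply: eq_bigr => i _.
by rewrite (linZ hP) -iterSr -iterS.
Qed.

Lemma pevalX x : peval 'X P x = P x.
Proof. by rewrite -[X in peval X]mul1r peval_mulX pevalC scale1r. Qed.

Lemma pevalM p q x : peval (p * q) P x = peval p P (peval q P x).
Proof.
elim/poly_ind: p x => [|p c IH] x.
  by rewrite mul0r !peval0.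
rewrite mulrDl pevalD pevalD pevalC -mulrA [_ * q]mulrC mulrA.
rewrite peval_mulX IH peval_mulX peval_comm.
by rewrite mul_polyC pevalZ.
Qed.
End Peval.
Lemma zmod_id (V : zmodType) (A B C a b c : V) :
  A - (B + C) = ((A - a) + (a - (b + c))) - ((B - b) + (C - c)).
Proof. by rewrite addrA subrK addrACA -opprD opprB addrA subrK. Qed.

Section Spectral.
Variable R : realType.
Variable H : lmodType R[i].
Variable ip : H -> H -> R[i].
Hypothesis hip : is_inner_product ip.
Local Notation rip x y := (complex.Re (ip x y)).
Local Notation hn := (hnorm ip).

Definition sa (T : H -> H) := forall x y, ip (T x) y = ip x (T y).

Definition good (P : H -> H) (M : R) :=
  [/\ lin P, sa P, (forall y, 0 <= rip (P y) y), 0 < M & (forall y, hn (P y) <= M * hn y)].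

Definition fc (P : H -> H) (M : R) (h : R -> R) (F : H -> H) :=
  forall e, 0 < e -> exists p : {poly R},
    (forall t, 0 <= t <= M -> `|p.[t] - h t| <= e) /\
    (forall x, hn (F x - peval p P x) <= e * hn x).

Lemma fcalc_fc P M h F : 0 <= M -> (forall x, hn (P x) <= M * hn x) ->
  is_fcalc ip P h F -> fc P M h F.
Proof. by move=> M0 hM hF e e0; apply: hF. Qed.

Lemma hn0 : hn 0 = 0.
Proof. by rewrite /hnorm ip0l // Re0 sqrtr0. Qed.

Lemma hn_sum (I : finType) (F : I -> H) : hn (\sum_i F i) <= \sum_i hn (F i).
Proof.
apply: (big_rec2 (fun (a : R) (b : H) => hn b <= a)); first by rewrite hn0.
move=> i a b _ h; apply: le_trans (hnD hip _ _) _; exact: lerD.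
Qed.

Lemma hnB_le x y : hn (x - y) <= hn x + hn y.
Proof. by apply: le_trans (hnD hip _ _) _; rewrite hnN. Qed.

Lemma Im_add (a b : R[i]) : complex.Im (a + b) = complex.Im a + complex.Im b.
Proof. by case: a; case: b. Qed.
Lemma Re_add (a b : R[i]) : complex.Re (a + b) = complex.Re a + complex.Re b.
Proof. by case: a; case: b. Qed.

Lemma conjR (t : R) : (t%:C)^* = t%:C.
Proof. by apply/eqP; rewrite eq_complex /= oppr0 !eqxx. Qed.

Lemma le_eps0 (a : R) : (forall e, 0 < e -> a <= e) -> a <= 0.
Proof. by move=> h; apply/ler_addgt0Pr => e e0; rewrite add0r; apply: h. Qed.

Variables (P : H -> H) (M : R).
Hypothesis gP : good P M.

Let hP : lin P. Proof. by case: gP. Qed.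
Let saP : sa P. Proof. by case: gP. Qed.
Let posP y : 0 <= rip (P y) y. Proof. by case: gP. Qed.
Let M_gt0 : 0 < M. Proof. by case: gP. Qed.
Let bndP y : hn (P y) <= M * hn y. Proof. by case: gP. Qed.

Lemma sa_iter n x y : ip (iter n P x) y = ip x (iter n P y).
Proof.
elim: n x y => // n IH x y.
by rewrite iterS saP IH -iterSr iterS.
Qed.

Lemma sa_peval p : sa (peval p P).
Proof.
move=> x y; rewrite /peval (ip_suml hip) (ip_sumr hip); apply: eq_bigr => i _.
rewrite (ipZl hip) (ipZr hip) sa_iter; congr (_ * _).
by apply/eqP; rewrite eq_complex /= oppr0 !eqxx.
Qed.

Lemma peval_Im p y : complex.Im (ip (peval p P y) y) = 0.
Proof.
have := sa_peval p y y; rewrite [RHS](ip_sym hip) => /(congr1 (@complex.Im R)).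
rewrite Im_conj => h; lra.
Qed.

Lemma ripP_le z : rip (P z) z <= M * rip z z.
Proof.
apply: le_trans (rip_le hip _ _) _.
rewrite -(hn_sq hip) expr2 mulrA; apply: ler_wpM2r; [exact: hn_ge0 | exact: bndP].
Qed.

Lemma SOS_pos p : SOS M p -> forall y, 0 <= rip (peval p P y) y.
Proof.
elim=> [g|g|g|p1 q1 _ IH1 _ IH2] y.
- by rewrite (pevalM hP) sa_peval; apply: ip_ge0.
- rewrite peval_mulX (pevalM hP) sa_peval (peval_comm hP).
  exact: posP.
- have -> : g * g * (M%:P - 'X) = M *: (g * g) - g * g * 'X.
    by rewrite mulrBr -mul_polyC mulrC.
  rewrite pevalB (ripBl hip) pevalZ (ripZl hip).
  rewrite peval_mulX !(pevalM hP) (sa_peval g (peval g P y)).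
  rewrite (sa_peval g (peval g P (P y))) (peval_comm hP) subr_ge0.
  exact: ripP_le.
- by rewrite pevalD (ripDl hip) addr_ge0.
Qed.

Lemma poly_pos p : (forall t, 0 <= t <= M -> 0 <= p.[t]) ->
  forall y, 0 <= rip (peval p P y) y.
Proof.
move=> hp y; rewrite -oppr_le0; apply: le_eps0 => e e0.
set r := rip y y; have r0 : 0 <= r := ip_ge0 hip y.
set e' := e / (r + 1).
have e'0 : 0 < e' by rewrite divr_gt0 // ltr_pwDr.
have S : SOS M (p + e'%:P).
  apply: (pos_SOS M_gt0) => t ht; rewrite hornerD hornerC.
  have := hp t ht; lra.
have := SOS_pos S y; rewrite pevalD pevalC (ripDl hip) (ripZl hip) -/r => h.
have : e' * r <= e.
  rewrite /e' mulrAC ler_pdivrMr ?ltr_pwDr //; nra.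
lra.
Qed.

Lemma iter_bnd n y : hn (iter n P y) <= M ^+ n * hn y.
Proof.
elim: n => [|n IH] /=; first by rewrite expr0 mul1r.
apply: le_trans (bndP _) _; rewrite exprS -mulrA.
by apply: ler_wpM2l => //; exact: ltW.
Qed.

Definition pK (p : {poly R}) := \sum_(i < size p) `|p`_i| * M ^+ i.

Lemma pK_ge0 p : 0 <= pK p.
Proof. by apply: sumr_ge0 => i _; rewrite mulr_ge0 // exprn_ge0 // ltW. Qed.

Lemma peval_bnd p y : hn (peval p P y) <= pK p * hn y.
Proof.
apply: le_trans (hn_sum _) _; rewrite /pK mulr_suml; apply: ler_sum => i _.
rewrite (hnZ hip) cabsC -mulrA; apply: ler_wpM2l => //; exact: iter_bnd.
Qed.

Variables (h : R -> R) (F : H -> H).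
Hypothesis hF : fc P M h F.

Lemma fc_err p e y : (forall x, hn (F x - peval p P x) <= e * hn x) ->
  `|rip (F y) y - rip (peval p P y) y| <= e * rip y y.
Proof.
move=> hp2; rewrite -(ripBl hip) -(hn_sq hip) expr2 mulrA.
apply: le_trans (Re_le_cabs _) _; apply: le_trans (CS hip _ _) _.
by apply: ler_wpM2r; [exact: hn_ge0 | exact: hp2].
Qed.

Lemma fc_ge (l : {poly R}) : (forall t, 0 <= t <= M -> l.[t] <= h t) ->
  forall y, rip (peval l P y) y <= rip (F y) y.
Proof.
move=> hl y; apply/ler_addgt0Pr => e e0.
set r := rip y y; have r0 : 0 <= r := ip_ge0 hip y.
set e' := e / (2 * (r + 1)).
have e'0 : 0 < e' by rewrite divr_gt0 // mulr_gt0 // ltr_pwDr.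
have he : e' * (2 * (r + 1)) = e by rewrite /e' divfK // mulf_neq0 // gt_eqF // ltr_pwDr.
have [p [hp1 hp2]] := hF e'0.
have pp : 0 <= rip (peval (p - l + e'%:P) P y) y.
  apply: poly_pos => t ht; rewrite !(hornerD, hornerN, hornerC).
  have := hp1 t ht; rewrite ler_norml => /andP [h1 _].
  have := hl t ht; lra.
rewrite pevalD pevalB pevalC (ripDl hip) (ripBl hip) (ripZl hip) -/r in pp.
have := fc_err y hp2; rewrite ler_norml -/r => /andP [h1 h2].
nra.
Qed.

Lemma fc_le (l : {poly R}) : (forall t, 0 <= t <= M -> h t <= l.[t]) ->
  forall y, rip (F y) y <= rip (peval l P y) y.
Proof.
move=> hl y; apply/ler_addgt0Pr => e e0.
set r := rip y y; have r0 : 0 <= r := ip_ge0 hip y.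
set e' := e / (2 * (r + 1)).
have e'0 : 0 < e' by rewrite divr_gt0 // mulr_gt0 // ltr_pwDr.
have he : e' * (2 * (r + 1)) = e by rewrite /e' divfK // mulf_neq0 // gt_eqF // ltr_pwDr.
have [p [hp1 hp2]] := hF e'0.
have pp : 0 <= rip (peval (l - p + e'%:P) P y) y.
  apply: poly_pos => t ht; rewrite !(hornerD, hornerN, hornerC).
  have := hp1 t ht; rewrite ler_norml => /andP [_ h1].
  have := hl t ht; lra.
rewrite pevalD pevalB pevalC (ripDl hip) (ripBl hip) (ripZl hip) -/r in pp.
have := fc_err y hp2; rewrite ler_norml -/r => /andP [h1 h2].
nra.
Qed.

Lemma fc_pos : (forall t, 0 <= t <= M -> 0 <= h t) -> forall y, 0 <= rip (F y) y.
Proof.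
move=> hh y; have := @fc_ge 0 _ y; rewrite peval0 (ip0l hip) Re0; apply.
by move=> t ht; rewrite horner0; apply: hh.
Qed.

Lemma fc_Im y : complex.Im (ip (F y) y) = 0.
Proof.
apply/eqP; rewrite -normr_le0; apply: le_eps0 => e e0.
set r := rip y y; have r0 : 0 <= r := ip_ge0 hip y.
set e' := e / (r + 1).
have e'0 : 0 < e' by rewrite divr_gt0 // ltr_pwDr.
have he : e' * (r + 1) = e by rewrite /e' divfK // gt_eqF // ltr_pwDr.
have [p [hp1 hp2]] := hF e'0.
have -> : ip (F y) y = ip (F y - peval p P y) y + ip (peval p P y) y.
  by rewrite (ipBl hip) subrK.
rewrite Im_add peval_Im addr0.
apply: le_trans (Im_le_cabs _) _; apply: le_trans (CS hip _ _) _.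
apply: le_trans (ler_wpM2r (hn_ge0 _ _) (hp2 y)) _.
rewrite -mulrA -expr2 (hn_sq hip) -/r; nra.
Qed.

Lemma fc_sa : sa F.
Proof.
move=> x y; apply/eqP; rewrite -subr_eq0; apply/eqP; apply: cabs_eq0.
apply/le_anti; rewrite cabs_ge0 andbT; apply: le_eps0 => e e0.
set r := hn x * hn y; have r0 : 0 <= r by rewrite mulr_ge0 ?hn_ge0.
set e' := e / (2 * (r + 1)).
have e'0 : 0 < e' by rewrite divr_gt0 // mulr_gt0 // ltr_pwDr.
have he : e' * (2 * (r + 1)) = e by rewrite /e' divfK // mulf_neq0 // gt_eqF // ltr_pwDr.
have [p [hp1 hp2]] := hF e'0.
have -> : ip (F x) y - ip x (F y) =
    ip (F x - peval p P x) y - ip x (F y - peval p P y).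
  by rewrite (ipBl hip) (ipBr hip) sa_peval opprB addrA subrK.
apply: le_trans (cabsD _ _) _; rewrite cabsN.
have h1 := CS hip (F x - peval p P x) y.
have h2 := CS hip x (F y - peval p P y).
have h3 := ler_wpM2r (hn_ge0 ip y) (hp2 x).
have h4 := ler_wpM2l (hn_ge0 ip x) (hp2 y).
have hx := hn_ge0 ip x; have hy := hn_ge0 ip y.
rewrite -/r in r0.
have : e' * hn x * hn y = e' * r by rewrite /r mulrA.
have : hn x * (e' * hn y) = e' * r by rewrite /r mulrCA mulrA.
nra.
Qed.

Lemma fc_lin : lin F.
Proof.
move=> a x y; apply/eqP; rewrite -subr_eq0; apply/eqP; apply: (hn_eq0 hip).
apply/le_anti; rewrite hn_ge0 andbT; apply: le_eps0 => e e0.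
set S := hn (a *: x + y) + cabs a * hn x + hn y.
have S0 : 0 <= S by rewrite !addr_ge0 ?mulr_ge0 ?hn_ge0 ?cabs_ge0.
set e' := e / (S + 1).
have e'0 : 0 < e' by rewrite divr_gt0 // ltr_pwDr.
have he : e' * (S + 1) = e by rewrite /e' divfK // gt_eqF // ltr_pwDr.
have [p [hp1 hp2]] := hF e'0.
rewrite (zmod_id _ (a *: F x) _ (peval p P (a *: x + y)) (a *: peval p P x) (peval p P y)).
rewrite (peval_lin hP) subrr addr0 -scalerBr.
apply: le_trans (hnB_le _ _) _; apply: le_trans (lerD (lexx _) (hnD hip _ _)) _.
rewrite (hnZ hip).
have h1 := hp2 (a *: x + y); have h2 := hp2 x; have h3 := hp2 y.
have ha := cabs_ge0 a.
have h2' := ler_wpM2l ha h2.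
have : e' * S <= e by nra.
rewrite (peval_lin hP) in h1.
rewrite /S; nra.
Qed.

Lemma fc_bnd : exists K, 0 < K /\ forall y, hn (F y) <= K * hn y.
Proof.
have [p [_ hp2]] := hF ltr01.
exists (pK p + 1); split; first by rewrite ltr_pwDr // pK_ge0.
move=> y; have -> : F y = (F y - peval p P y) + peval p P y by rewrite subrK.
apply: le_trans (hnD hip _ _) _.
have := hp2 y; have := peval_bnd p y; rewrite mul1r; lra.
Qed.

Lemma fc_good : (forall t, 0 <= t <= M -> 0 <= h t) -> exists K, good F K.
Proof.
move=> hh; have [K [K0 hK]] := fc_bnd; exists K; split => //.
- exact: fc_lin.
- exact: fc_sa.
- exact: fc_pos.
Qed.

Lemma fc_sq K0 KF : (forall t, 0 <= t <= M -> `|h t| <= K0) -> 0 < KF ->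
  (forall y, hn (F y) <= KF * hn y) ->
  fc P M (fun t => h t ^+ 2) (fun y => F (F y)).
Proof.
move=> hK0 KF0 hKF e e0.
have K00 : 0 <= K0 by apply: le_trans (hK0 0 _); rewrite ?normr_ge0 // lexx ltW.
set D := 2 * K0 + 2 * KF + 2 + e.
have D0 : 0 < D by rewrite /D; lra.
set d := e / D.
have d0 : 0 < d by rewrite divr_gt0.
have hd : d * D = e by rewrite /d divfK // gt_eqF.
have [p [hp1 hp2]] := hF d0.
exists (p * p); split.
  move=> t ht; rewrite hornerM.
  have := hp1 t ht; have := hK0 t ht.
  set a := p.[t]; set b := h t => hb hab.
  have -> : a * a - b ^+ 2 = (a - b) * (a - b + 2 * b) by ring.
  rewrite normrM; apply: le_trans (ler_wpM2r (normr_ge0 _) hab) _.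
  have : `|a - b + 2 * b| <= d + 2 * K0.
    apply: le_trans (ler_normD _ _) _; rewrite normrM ger0_norm //. lra.
  move=> h3; have := ler_wpM2l (ltW d0) h3; rewrite /D in hd; nra.
move=> y; rewrite (pevalM hP).
have -> : F (F y) - peval p P (peval p P y) =
    F (F y - peval p P y) + (F (peval p P y) - peval p P (peval p P y)).
  by rewrite (linB fc_lin) addrA subrK.
apply: le_trans (hnD hip _ _) _.
have h1 := hKF (F y - peval p P y); have h2 := hp2 y; have h3 := hp2 (peval p P y).
have h4 : hn (peval p P y) <= KF * hn y + d * hn y.
  have -> : peval p P y = F y - (F y - peval p P y) by rewrite opprB addrC subrK.
  apply: le_trans (hnB_le _ _) _; exact: lerD (hKF y) (hp2 y).
have hy := hn_ge0 ip y.
have h5 := ler_wpM2l (ltW KF0) h2.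
have h6 := ler_wpM2l (ltW d0) h4.
have d1 : d <= 1 by rewrite /d ler_pdivrMr // mul1r /D; lra.
have t4 : 0 <= d * hn y := mulr_ge0 (ltW d0) hy.
have t1 : d * (d * hn y) <= d * hn y by nra.
have t2 : 0 <= d * K0 * hn y := mulr_ge0 (mulr_ge0 (ltW d0) K00) hy.
have t3 : 0 <= d * e * hn y := mulr_ge0 (mulr_ge0 (ltW d0) (ltW e0)) hy.
rewrite -hd /D; nra.
Qed.
End Spectral.
Section Convex.
Local Open Scope classical_set_scope.
Variable R : realType.
Variable f : R -> R.
Hypothesis hfi : increasing_on_nonneg f.
Hypothesis hfc : convex_on_nonneg f.

Lemma three_slope u s v : 0 <= u -> u < s -> s < v ->
  (f s - f u) * (v - s) <= (f v - f s) * (s - u).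
Proof.
move=> u0 us sv.
set l := (v - s) / (v - u).
have vu : 0 < v - u by lra.
have l0 : 0 <= l by rewrite divr_ge0 // ltW // subr_gt0.
have l1 : l <= 1 by rewrite ler_pdivrMr // mul1r; lra.
have hs : l * u + (1 - l) * v = s.
  rewrite /l; field; lra.
have := hfc (x:=u) (y:=v) (t:=l) u0 (ltW (le_lt_trans u0 (lt_trans us sv))).
rewrite l0 l1 hs => /(_ isT) h.
have e1 : l * (v - u) = v - s by rewrite /l divfK // gt_eqF.
nra.
Qed.

Lemma supp_line s : 0 <= s -> exists c, forall t, 0 <= t -> f s + c * (t - s) <= f t.
Proof.
move=> s0; have [->|sp] := eqVneq s 0.
  by exists 0 => t t0; rewrite mul0r addr0; apply: hfi.
have spos : 0 < s by rewrite lt_def sp s0.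
pose E : set R := fun y => exists u, [/\ 0 <= u, u < s & y = (f s - f u) / (s - u)].
have E0 : E !=set0 by exists ((f s - f 0) / (s - 0)), 0; split.
have ubE : forall v, s < v -> ubound E ((f v - f s) / (v - s)).
  move=> v sv y [u [u0 us ->]].
  rewrite ler_pdivrMr ?subr_gt0 // mulrAC ler_pdivlMr ?subr_gt0 //.
  exact: three_slope.
have hsE : has_sup E by split => //; exists ((f (s + 1) - f s) / (s + 1 - s)); apply: ubE; lra.
exists (sup E) => t t0.
have [ts|st] := ltrP t s.
  have := sup_upper_bound hsE; move=> /(_ ((f s - f t) / (s - t))).
  have : E ((f s - f t) / (s - t)) by exists t; split.
  move=> Et /(_ Et); rewrite ler_pdivrMr ?subr_gt0 // => h; lra.
have [tse|ts'] := eqVneq t s.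
  by rewrite tse subrr mulr0 addr0.
have st' : s < t by rewrite lt_def st andbT; apply/eqP => h; move/eqP: ts'; rewrite h.
have := ge_sup E0 (ubE t st'); rewrite ler_pdivlMr ?subr_gt0 // => h; lra.
Qed.
End Convex.

Section PowIneq.
Variable R : realType.

Lemma pow_tangent (p s y : R) : 1 < p -> 0 <= s -> 0 <= y ->
  s `^ p + p * s `^ (p - 1) * (y - s) <= y `^ p.
Proof.
move=> p1 s0 y0.
have p0 : 0 < p by lra.
set q := p / (p - 1).
have q0 : 0 < q by rewrite divr_gt0 // subr_gt0.
have pq : p^-1 + q^-1 = 1 by rewrite /q invf_div; field; lra.
have := conjugate_powR y0 (powR_ge0 s (p - 1)) p0 q0 pq.
rewrite -powRrM.
have -> : (p - 1) * q = p by rewrite /q; field; lra.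
move=> h.
have hm : s * s `^ (p - 1) = s `^ p by rewrite mulr_powRB1.
have : p * (y * s `^ (p - 1)) <= y `^ p + (p - 1) * s `^ p.
  have := ler_wpM2l (ltW p0) h.
  have -> : p * (y `^ p / p + s `^ p / q) = y `^ p + (p - 1) * s `^ p.
    by rewrite /q; field; lra.
  done.
nra.
Qed.
End PowIneq.
Section Main.
Variable R : realType.
Variable H : lmodType R[i].
Variable ip : H -> H -> R[i].
Hypothesis hip : is_inner_product ip.
Local Notation rip x y := (complex.Re (ip x y)).
Local Notation hn := (hnorm ip).

Lemma bnd_pos T : is_bounded ip T ->
  lin T /\ exists M, 0 < M /\ forall x, hn (T x) <= M * hn x.
Proof.
case=> hT [M hM]; split; first exact: hT.
exists (Num.max M 1); split; first by rewrite lt_max ltr01 orbT.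
move=> x; apply: le_trans (hM x) _; apply: ler_wpM2r; first exact: hn_ge0.
by rewrite le_max lexx.
Qed.

Lemma adj_lin T Ts : lin T -> is_adjoint ip T Ts -> lin Ts.
Proof.
move=> hT hTs a x y.
apply/eqP; rewrite -subr_eq0; apply/eqP; apply: (ip_def hip).
set z := _ - _.
have h : forall w, ip w z = 0.
  move=> w; rewrite /z (ipBr hip) (ipDr hip) (ipZr hip) -!hTs (ipDr hip) (ipZr hip).
  by rewrite subrr.
exact: h.
Qed.

Lemma adj_bnd T Ts M : is_adjoint ip T Ts -> 0 < M ->
  (forall x, hn (T x) <= M * hn x) -> forall z, hn (Ts z) <= M * hn z.
Proof.
move=> hTs M0 hM z.
have h1 : hn (Ts z) ^+ 2 <= M * hn (Ts z) * hn z.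
  rewrite (hn_sq hip) -hTs; apply: le_trans (rip_le hip _ _) _.
  by apply: ler_wpM2r; [exact: hn_ge0 | exact: hM].
have h0 := hn_ge0 ip (Ts z); have hz := hn_ge0 ip z.
have [e0|en0] := eqVneq (hn (Ts z)) 0; first by rewrite e0 mulr_ge0 // ltW.
have hp : 0 < hn (Ts z) by rewrite lt_def en0 h0.
rewrite expr2 -mulrA mulrCA in h1.
by rewrite -(ler_pM2l hp).
Qed.

Lemma good_TsT T Ts : is_bounded ip T -> is_adjoint ip T Ts ->
  exists M, good ip (fun y => Ts (T y)) M.
Proof.
move=> /bnd_pos [hT [M [M0 hM]]] hTs.
have hTs' := adj_lin hT hTs.
exists (M * M); split.
- exact: lin_comp.
- move=> x y; rewrite -hTs [LHS](ip_sym hip) -hTs -(ip_sym hip) //.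
- by move=> y; rewrite (ip_sym hip) -hTs Re_conj; apply: ip_ge0.
- exact: mulr_gt0.
- move=> y; apply: le_trans (adj_bnd hTs M0 hM _) _.
  by rewrite -mulrA; apply: ler_wpM2l; [exact: ltW | exact: hM].
Qed.

Lemma good_TTs T Ts : is_bounded ip T -> is_adjoint ip T Ts ->
  exists M, good ip (fun y => T (Ts y)) M.
Proof.
move=> /bnd_pos [hT [M [M0 hM]]] hTs.
have hTs' := adj_lin hT hTs.
exists (M * M); split.
- exact: lin_comp.
- move=> x y; rewrite hTs [RHS](ip_sym hip) hTs -(ip_sym hip) //.
- by move=> y; rewrite hTs; apply: ip_ge0.
- exact: mulr_gt0.
- move=> y; apply: le_trans (hM _) _.
  by rewrite -mulrA; apply: ler_wpM2l; [exact: ltW | exact: (adj_bnd hTs M0 hM)].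
Qed.

Lemma sqrt_calc Q MQ Rt : good ip Q MQ -> fc ip Q MQ Num.sqrt Rt ->
  forall y, rip (Rt y) (Rt y) = rip (Q y) y.
Proof.
move=> gQ hR y.
have [KR gR] := fc_good hip gQ hR (fun t _ => sqrtr_ge0 t).
have [_ saR _ KR0 bR] := gR.
have MQ0 : 0 < MQ by case: gQ.
have hK : forall t, 0 <= t <= MQ -> `|Num.sqrt t| <= Num.sqrt MQ.
  by move=> t /andP [t0 tM]; rewrite ger0_norm ?sqrtr_ge0 // ler_sqrt // ltW.
have hsq := fc_sq hip gQ hR hK KR0 bR.
have hX : forall t, 0 <= t <= MQ -> 'X.[t] = Num.sqrt t ^+ 2.
  by move=> t /andP [t0 _]; rewrite hornerX sqr_sqrtr.
have hX1 : forall t, 0 <= t <= MQ -> 'X.[t] <= Num.sqrt t ^+ 2.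
  by move=> t ht; rewrite hX.
have hX2 : forall t, 0 <= t <= MQ -> Num.sqrt t ^+ 2 <= 'X.[t].
  by move=> t ht; rewrite hX.
have e1 := fc_ge hip gQ hsq hX1 y.
have e2 := fc_le hip gQ hsq hX2 y.
rewrite pevalX /= in e1 e2.
rewrite -(saR (Rt y) y); apply/le_anti; rewrite e1 e2. done.
Qed.

Lemma jensen P M F f : good ip P M -> fc ip P M f F ->
  increasing_on_nonneg f -> convex_on_nonneg f ->
  forall x, rip x x = 1 -> f (rip (P x) x) <= rip (F x) x.
Proof.
move=> gP hF hfi hfc x hx.
have [_ _ posP _ _] := gP.
set s := rip (P x) x.
have [c hc] := supp_line hfi hfc (posP x).
pose l := (f s)%:P + c *: ('X - s%:P).
have hl : forall t, 0 <= t <= M -> l.[t] <= f t.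
  move=> t /andP [t0 _]; rewrite /l hornerD hornerC hornerZ hornerXsubC.
  exact: hc.
have := fc_ge hip gP hF hl x.
rewrite /l pevalD pevalC pevalZ pevalB pevalX pevalC.
rewrite (ripDl hip) (ripZl hip) (ripZl hip) (ripBl hip) (ripZl hip) hx -/s.
by rewrite !mulr1 subrr mulr0 addr0.
Qed.

Lemma jensen_pow Rt K PA (q : R) : good ip Rt K ->
  fc ip Rt K (fun t => t `^ (2 * q)) PA -> 1 < q ->
  forall x, rip x x = 1 -> (rip (Rt x) (Rt x)) `^ q <= rip (PA x) x.
Proof.
move=> gR hF q1 x hx.
have [hR saR _ _ _] := gR.
set s := rip (Rt x) (Rt x).
have s0 : 0 <= s := ip_ge0 hip _.
pose c := q * s `^ (q - 1).
pose l := (s `^ q)%:P + c *: ('X * 'X - s%:P).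
have hl : forall t, 0 <= t <= K -> l.[t] <= t `^ (2 * q).
  move=> t /andP [t0 _]; rewrite /l hornerD hornerC hornerZ hornerD hornerN hornerC hornerM hornerX.
  rewrite powRrM (@powR_mulrn _ t 2 t0) expr2.
  by apply: pow_tangent => //; rewrite mulr_ge0.
have := fc_ge hip gR hF hl x.
rewrite /l pevalD pevalC pevalZ pevalB (pevalM hR) !pevalX pevalC.
rewrite (ripDl hip) (ripZl hip) (ripZl hip) (ripBl hip) (ripZl hip) hx saR -/s.
by rewrite !mulr1 subrr mulr0 addr0.
Qed.

Lemma ip1 e : rip e e = 1 -> ip e e = 1.
Proof. by move=> h; rewrite (ipxx hip) h. Qed.

Lemma cabsMn (z : R[i]) n : cabs (z *+ n) = cabs z *+ n.
Proof. by apply: (@complexI R); rewrite rmorphMn /= -!cabs_norm normrMn. Qed.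

Lemma buzano a b e : rip e e = 1 ->
  cabs (ip a e * ip e b) *+ 2 <= cabs (ip a b) + hn a * hn b.
Proof.
move=> he.
set c : R[i] := ip b e *+ 2.
set v := c *: e - b.
have hc : conjc c = ip e b *+ 2 by rewrite /c rmorphMn /= -(ip_sym hip).
have hvv : ip v v = ip b b.
  rewrite /v (ipBl hip) !(ipBr hip) !(ipZl hip) !(ipZr hip) (ip1 he) hc /c.
  rewrite [ip e b](ip_sym hip); ring.
have hav : ip a v = (ip a e * ip e b) *+ 2 - ip a b.
  by rewrite /v (ipBr hip) (ipZr hip) hc mulrnAl [ip e b * _]mulrC.
have hnv : hn v = hn b by rewrite /hnorm hvv.
rewrite -cabsMn.
have -> : (ip a e * ip e b) *+ 2 = ip a v + ip a b by rewrite hav subrK.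
apply: le_trans (cabsD _ _) _; rewrite addrC lerD2l -hnv.
exact: CS.
Qed.
End Main.

Lemma ipR_of (R : realType) (c : R[i]) : complex.Im c = 0 -> c = (complex.Re c)%:C.
Proof. by case: c => u v /= ->. Qed.

Lemma cvx_half (R : realType) (f : R -> R) : convex_on_nonneg f ->
  forall a b, 0 <= a -> 0 <= b -> f ((a + b) / 2) <= (f a + f b) / 2.
Proof.
move=> hfc a b a0 b0.
have h := hfc a b (1 / 2) a0 b0.
have h0 : (0 : R) <= 1 / 2 by lra.
have h1 : (1 / 2 : R) <= 1 by lra.
rewrite h0 h1 in h; have := h isT.
have -> : 1 / 2 * a + (1 - 1 / 2) * b = (a + b) / 2 by field.
have -> : 1 / 2 * f a + (1 - 1 / 2) * f b = (f a + f b) / 2 by field.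
done.
Qed.

Theorem theorem3p1 (R : realType) (H : lmodType R[i]) (ip : H -> H -> R[i])
  (hH : is_hilbert ip)
  (A B As Bs : H -> H)
  (hA : is_bounded ip A) (hB : is_bounded ip B)
  (hAs : is_adjoint ip A As) (hBs : is_adjoint ip B Bs)
  (absA absBs : H -> H)
  (habsA : is_fcalc ip (fun y => As (A y)) Num.sqrt absA)    (* |A| *)
  (habsBs : is_fcalc ip (fun y => B (Bs y)) Num.sqrt absBs)  (* |B^*| *)
  (x : H) (hx : hnorm ip x = 1)
  (f : R -> R) (hfi : increasing_on_nonneg f) (hfc : convex_on_nonneg f) :
  (forall alpha : R, 0 < alpha < 1 ->
    forall PA FA PB FB : H -> H,
    is_fcalc ip absA (fun t => t `^ (2 / alpha)) PA ->          (* |A|^(2/a) *)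
    is_fcalc ip PA f FA ->                                       (* f(|A|^(2/a)) *)
    is_fcalc ip absBs (fun t => t `^ (2 / (1 - alpha))) PB ->    (* |B^*|^(2/(1-a)) *)
    is_fcalc ip PB f FB ->                                       (* f(|B^*|^(2/(1-a))) *)
    (f (cabs (ip (A x) x * ip (B x) x) ^+ 2))%:C <=
      ((f (cabs (ip (B (A x)) x) ^+ 2))%:C
       + ip (alpha%:C *: FA x + (1 - alpha)%:C *: FB x) x) / 2%:R)
  /\
  (forall PA FA PB FB : H -> H,
    is_fcalc ip absA (fun t => t ^+ 2) PA ->                     (* |A|^2 *)
    is_fcalc ip PA f FA ->                                       (* f(|A|^2) *)
    is_fcalc ip absBs (fun t => t ^+ 2) PB ->                    (* |B^*|^2 *)
    is_fcalc ip PB f FB ->                                       (* f(|B^*|^2) *)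
    (f (cabs (ip (A x) x * ip (B x) x)))%:C <=
      (1 / 2%:R) * (f (cabs (ip (B (A x)) x)))%:C
      + (1 / 4%:R) * ip (FA x + FB x) x).
Proof.
have hip : is_inner_product ip by case: hH.
have hx1 : complex.Re (ip x x) = 1 by rewrite -(hn_sq hip) hx expr1n.
have [MA gQA] := good_TsT hip hA hAs.
have [MB gQB] := good_TTs hip hB hBs.
have [_ _ _ MA0 bQA] := gQA.
have [_ _ _ MB0 bQB] := gQB.
have fRA := fcalc_fc (ltW MA0) bQA habsA.
have fRB := fcalc_fc (ltW MB0) bQB habsBs.
have [KA gRA] := fc_good hip gQA fRA (fun t _ => sqrtr_ge0 t).
have [KB gRB] := fc_good hip gQB fRB (fun t _ => sqrtr_ge0 t).
have [_ saRA _ KA0 bRA] := gRA.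
have [_ saRB _ KB0 bRB] := gRB.
have eA : complex.Re (ip (absA x) (absA x)) = complex.Re (ip (A x) (A x)).
  by rewrite (sqrt_calc hip gQA fRA x) (ip_sym hip) -hAs Re_conj.
have eB : complex.Re (ip (absBs x) (absBs x)) = complex.Re (ip (Bs x) (Bs x)).
  by rewrite (sqrt_calc hip gQB fRB x) hBs.
have hbz := buzano hip (A x) (Bs x) hx1.
rewrite -(hBs x x) -(hBs (A x) x) in hbz.
set w := cabs (ip (A x) x * ip (B x) x) in hbz *.
set u := cabs (ip (B (A x)) x) in hbz *.
set a := complex.Re (ip (A x) (A x)) in eA *.
set b := complex.Re (ip (Bs x) (Bs x)) in eB *.
set v := hnorm ip (A x) * hnorm ip (Bs x) in hbz.
have v2 : v ^+ 2 = a * b by rewrite /v exprMn !(hn_sq hip).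
have v0 : 0 <= v by rewrite /v mulr_ge0 ?hn_ge0.
have w0 : 0 <= w by apply: cabs_ge0.
have u0 : 0 <= u by apply: cabs_ge0.
have a0 : 0 <= a by apply: ip_ge0.
have b0 : 0 <= b by apply: ip_ge0.
rewrite mulr2n in hbz.
split.
- move=> alpha /andP [al0 al1] PA FA PB FB hPA hFA hPB hFB.
  have be0 : 0 < 1 - alpha by lra.
  have fPA := fcalc_fc (ltW KA0) bRA hPA.
  have fPB := fcalc_fc (ltW KB0) bRB hPB.
  have [KPA gPA] := fc_good hip gRA fPA (fun t _ => powR_ge0 _ _).
  have [KPB gPB] := fc_good hip gRB fPB (fun t _ => powR_ge0 _ _).
  have [_ _ posPA KPA0 bPA] := gPA.
  have [_ _ posPB KPB0 bPB] := gPB.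
  have fFA := fcalc_fc (ltW KPA0) bPA hFA.
  have fFB := fcalc_fc (ltW KPB0) bPB hFB.
  have jA := jensen hip gPA fFA hfi hfc hx1.
  have jB := jensen hip gPB fFB hfi hfc hx1.
  have pA := jensen_pow hip gRA fPA (q := alpha^-1) _ hx1.
  have pB := jensen_pow hip gRB fPB (q := (1 - alpha)^-1) _ hx1.
  rewrite eA in pA; rewrite eB in pB.
  have {}pA := pA ltac:(by rewrite invf_gt1).
  have {}pB := pB ltac:(by rewrite invf_gt1 // ltrBlDr ltrDl).
  set A1 := complex.Re (ip (PA x) x) in jA pA.
  set B1 := complex.Re (ip (PB x) x) in jB pB.
  have A10 : 0 <= A1 := posPA x.
  have B10 : 0 <= B1 := posPB x.
  have aA : a <= A1 `^ alpha.
    have nn1 : a `^ alpha^-1 \in Num.nneg by rewrite nnegrE powR_ge0.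
    have nn2 : A1 \in Num.nneg by rewrite nnegrE.
    have := ge0_ler_powR (ltW al0) nn1 nn2 pA.
    by rewrite -powRrM mulVf ?gt_eqF // powRr1.
  have bB : b <= B1 `^ (1 - alpha).
    have nn1 : b `^ (1 - alpha)^-1 \in Num.nneg by rewrite nnegrE powR_ge0.
    have nn2 : B1 \in Num.nneg by rewrite nnegrE.
    have := ge0_ler_powR (ltW be0) nn1 nn2 pB.
    by rewrite -powRrM mulVf ?gt_eqF // powRr1.
  have ab : a * b <= alpha * A1 + (1 - alpha) * B1.
    apply: le_trans (ler_pM a0 b0 aA bB) _.
    have ia : 0 < alpha^-1 by rewrite invr_gt0.
    have ib : 0 < (1 - alpha)^-1 by rewrite invr_gt0.
    have pq : alpha^-1^-1 + (1 - alpha)^-1^-1 = 1 by rewrite !invrK; lra.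
    have := conjugate_powR (powR_ge0 A1 alpha) (powR_ge0 B1 (1 - alpha)) ia ib pq.
    rewrite -!powRrM !mulfV ?gt_eqF // !powRr1 // !invrK => h; lra.
  have fv : f (v ^+ 2) <= alpha * complex.Re (ip (FA x) x) + (1 - alpha) * complex.Re (ip (FB x) x).
    have h1 : f (v ^+ 2) <= f (alpha * A1 + (1 - alpha) * B1).
      by apply: hfi; [rewrite sqr_ge0 | rewrite v2].
    have h2 := hfc A1 B1 alpha A10 B10.
    rewrite (ltW al0) (ltW al1) in h2; have {}h2 := h2 isT.
    have h3 := ler_wpM2l (ltW al0) jA.
    have h4 := ler_wpM2l (ltW be0) jB.
    lra.
  have fw : f (w ^+ 2) <= (f (u ^+ 2) + f (v ^+ 2)) / 2.
    apply: le_trans (cvx_half hfc (sqr_ge0 u) (sqr_ge0 v)).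
    apply: hfi; first by rewrite sqr_ge0.
    have h := ler_pM (addr_ge0 w0 w0) (addr_ge0 w0 w0) hbz hbz.
    have := sqr_ge0 (u - v); rewrite !expr2 in h *; nra.
  have imA := fc_Im hip gPA fFA x.
  have imB := fc_Im hip gPB fFB x.
  rewrite (ipDl hip) !(ipZl hip) (ipR_of imA) (ipR_of imB).
  rewrite -!rmorphM -!rmorphD /= -(rmorph_nat (real_complex R) 2) -fmorphV -rmorphM /=.
  rewrite lecR; lra.
- move=> PA FA PB FB hPA hFA hPB hFB.
  have fPA := fcalc_fc (ltW KA0) bRA hPA.
  have fPB := fcalc_fc (ltW KB0) bRB hPB.
  have [KPA gPA] := fc_good hip gRA fPA (fun t _ => sqr_ge0 t).
  have [KPB gPB] := fc_good hip gRB fPB (fun t _ => sqr_ge0 t).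
  have [_ _ posPA KPA0 bPA] := gPA.
  have [_ _ posPB KPB0 bPB] := gPB.
  have fFA := fcalc_fc (ltW KPA0) bPA hFA.
  have fFB := fcalc_fc (ltW KPB0) bPB hFB.
  have jA := jensen hip gPA fFA hfi hfc hx1.
  have jB := jensen hip gPB fFB hfi hfc hx1.
  have [hRA _ _ _ _] := gRA.
  have [hRB _ _ _ _] := gRB.
  have hl1 : forall K, forall t, 0 <= t <= K -> ('X * 'X : {poly R}).[t] <= t ^+ 2.
    by move=> K t _; rewrite hornerM hornerX expr2.
  have hl2 : forall K, forall t, 0 <= t <= K -> t ^+ 2 <= ('X * 'X : {poly R}).[t].
    by move=> K t _; rewrite hornerM hornerX expr2.
  have eA2 : complex.Re (ip (PA x) x) = a.
    have e1 := fc_ge hip gRA fPA (hl1 KA) x.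
    have e2 := fc_le hip gRA fPA (hl2 KA) x.
    rewrite (pevalM hRA) !pevalX saRA eA in e1 e2.
    by apply/le_anti; rewrite e1 e2.
  have eB2 : complex.Re (ip (PB x) x) = b.
    have e1 := fc_ge hip gRB fPB (hl1 KB) x.
    have e2 := fc_le hip gRB fPB (hl2 KB) x.
    rewrite (pevalM hRB) !pevalX saRB eB in e1 e2.
    by apply/le_anti; rewrite e1 e2.
  rewrite eA2 in jA; rewrite eB2 in jB.
  have vab : v <= (a + b) / 2.
    have := sqr_ge0 (hnorm ip (A x) - hnorm ip (Bs x)).
    rewrite /v /a /b -!(hn_sq hip); nra.
  have fv : f v <= (complex.Re (ip (FA x) x) + complex.Re (ip (FB x) x)) / 2.
    apply: le_trans (_ : f v <= f ((a + b) / 2)) _; first by apply: hfi.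
    apply: le_trans (cvx_half hfc a0 b0) _; lra.
  have fw : f w <= (f u + f v) / 2.
    apply: le_trans (cvx_half hfc u0 v0).
    apply: hfi => //; lra.
  have imA := fc_Im hip gPA fFA x.
  have imB := fc_Im hip gPB fFB x.
  rewrite (ipDl hip) (ipR_of imA) (ipR_of imB).
  rewrite -!rmorphD /= !div1r -!(rmorph_nat (real_complex R)) -!fmorphV.
  rewrite -!rmorphM -!rmorphD /= lecR; lra.
Qed.
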